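(* Let $\gamma,\lambda\in(0,1)$, $0\le a<b<\infty$ and $H>1$. Let $g:\mathbb R^d\to\mathbb R$ be a bounded, nonnegative, continuous function with $g(x)\le H$ and $|g(x)-g(y)|\le H|x-y|^\gamma$ for all $x,y\in\mathbb R^d$. Then for every $R>1$ and every $r$ with $$0<r<\frac Rb\wedge\Big[\frac1{b-a}\Big(2^{-\frac{\gamma+1}{\gamma}}H^{-\frac d\gamma}R^{d-1}\frac{d\pi^{d/2}}{\Gamma(d/2+1)}\Big)^{\frac1{\gamma+d-1}}\Big],$$ we have $$\Big(\int_{R+ar<|x|<R+br}g(x)\,dx\Big)^{\frac{\gamma\lambda+d}{\gamma+d}}\le N\,R^{\frac{d(d-1)}{\gamma+d}}\big(r(b-a)\big)^{-\frac{d(\gamma+d-1)}{\gamma+d}}\int_{R+ar<|x|<R+br}g(x)^\lambda\,dx,$$ where $N=N(\gamma,\lambda,d,H)$.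
   Context: $\Gamma$ denotes the Gamma function; all integrals are with respect to Lebesgue measure on $\mathbb R^d$. *)

(* Defs.v *)
From HB Require Import structures.
From mathcomp Require Import all_boot all_order all_algebra.
From mathcomp Require Import all_classical all_reals all_analysis.
Set Implicit Arguments. Unset Strict Implicit. Unset Printing Implicit Defensive.
Import Order.TTheory GRing.Theory Num.Theory.
Import numFieldNormedType.Exports.
Local Open Scope classical_set_scope.
Local Open Scope ring_scope.

(** Pushforward (image) measure, packaged with the measurability proof of
    the map so that it carries a canonical measure structure. *)
Definition pushm d1 d2 (T1 : measurableType d1) (T2 : measurableType d2)
  (R : realType) (m : {measure set T1 -> \bar R}) (f : T1 -> T2)
  (mf : measurable_fun [set: T1] f) : set T2 -> \bar R := pushforward m f.

Section pushm_measure.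
Local Open Scope ereal_scope.
Context d1 d2 (T1 : measurableType d1) (T2 : measurableType d2) (R : realType).
Variables (m : {measure set T1 -> \bar R}) (f : T1 -> T2).
Hypothesis mf : measurable_fun [set: T1] f.

Let pushm0 : pushm m mf set0 = 0.
Proof. by rewrite /pushm /pushforward preimage_set0 measure0. Qed.

Let pushm_ge0 A : 0 <= pushm m mf A.
Proof. by rewrite /pushm /pushforward; exact: measure_ge0. Qed.

Let pushm_sigma_additive : semi_sigma_additive (pushm m mf).
Proof.
move=> F mF tF mUF; rewrite /pushm /pushforward preimage_bigcup.
apply: measure_semi_sigma_additive.
- by move=> n; rewrite -[X in measurable X]setTI; exact: mf.
- apply/trivIsetP => /= i j _ _ ij; rewrite -preimage_setI.
  by move/trivIsetP : tF => /(_ _ _ _ _ ij) ->//; rewrite preimage_set0.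
- by rewrite -preimage_bigcup -[X in measurable X]setTI; exact: mf.
Qed.

HB.instance Definition _ := isMeasure.Build _ _ _
  (pushm m mf) pushm0 pushm_ge0 pushm_sigma_additive.
End pushm_measure.

(** R^n is represented by [n.-tuple R] with the product sigma-algebra
    (generated by the coordinate maps). *)
Section Rn.
Context {R : realType}.

Definition tcons n (p : n.-tuple R * R) : n.+1.-tuple R :=
  [tuple of p.2 :: p.1].

Lemma measurable_tcons n : measurable_fun [set: n.-tuple R * R] (@tcons n).
Proof. exact: measurable_cons. Qed.

(** Lebesgue measure on R^n: the n-fold product of the Lebesgue measure on R
    (R^0 is a point, carrying the Dirac mass); R^(n+1) = R^n x R, transported
    along (t, x) |-> x :: t. *)
Fixpoint lebesgue_Rn (n : nat) : {measure set (n.-tuple R) -> \bar R} :=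
  match n with
  | 0 => @dirac _ (0.-tuple R) [tuple] R
  | n.+1 => pushm ((lebesgue_Rn n \x (@lebesgue_measure R))%E)
                  (@measurable_tcons n)
  end.

Definition norm_Rn n (x : n.-tuple R) : R :=
  Num.sqrt (\sum_(i < n) (tnth x i) ^+ 2).

Definition dist_Rn n (x y : n.-tuple R) : R :=
  Num.sqrt (\sum_(i < n) (tnth x i - tnth y i) ^+ 2).

Definition continuous_Rn n (f : n.-tuple R -> R) : Prop :=
  forall x (e : R), 0 < e -> exists2 del : R, 0 < del &
    forall y, dist_Rn x y < del -> `|f x - f y| < e.

Definition Gamma (s : R) : R :=
  Rintegral (@lebesgue_measure R) `]0, +oo[%classic
    (fun t => t `^ (s - 1) * expR (- t)).

Definition annulus n (R1 R2 : R) : set (n.-tuple R) :=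
  [set x | R1 < norm_Rn x < R2].
End Rn.

(* Main.v *)
Require Import Defs.
From HB Require Import structures.
From mathcomp Require Import all_boot all_order all_algebra.
From mathcomp Require Import all_classical all_reals all_analysis.
From mathcomp Require Import ring lra.
Import Order.TTheory GRing.Theory Num.Theory.
Import numFieldNormedType.Exports.
Local Open Scope classical_set_scope.
Local Open Scope ring_scope.
Set Implicit Arguments. Unset Strict Implicit. Unset Printing Implicit Defensive.
Section LInt.
Local Open Scope ereal_scope.
Context d (T : measurableType d) (R : realType) (mu : {measure set T -> \bar R}).
Import HBNNSimple.

Lemma lint_le (D E : set T) (f g : T -> \bar R) :
  (forall x, D x -> 0 <= f x) -> (forall x, E x -> 0 <= g x) ->
  (forall x, (f \_ D) x <= (g \_ E) x) ->
  \int[mu]_(x in D) f x <= \int[mu]_(x in E) g x.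
Proof.
move=> f0 g0 fg; rewrite (ge0_integralE _ f0) (ge0_integralE _ g0) /=.
apply: le_ereal_sup => _ [h hf <-]; exists h => //= x.
exact: le_trans (hf x) (fg x).
Qed.

Lemma lint_scale (D : set T) (f : T -> \bar R) (k : R) : (0 < k)%R ->
  (forall x, D x -> 0 <= f x) ->
  \int[mu]_(x in D) (k%:E * f x) <= k%:E * \int[mu]_(x in D) f x.
Proof.
move=> k0 f0.
have kf0 : forall x, D x -> 0 <= k%:E * f x.
  by move=> x Dx; apply: mule_ge0; [rewrite lee_fin ltW|apply: f0].
rewrite (ge0_integralE mu kf0) (ge0_integralE mu f0) /=.
apply: ge_ereal_sup => _ [h hf <-].
have ki0 : (0 <= k^-1)%R by rewrite invr_ge0 ltW.
pose h' := scale_nnsfun h ki0.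
have -> : sintegral mu h = k%:E * sintegral mu h'.
  rewrite -sintegralrM; apply: eq_sintegral => x /=.
  by rewrite mulrA mulfV ?gt_eqF// mul1r.
rewrite lee_pmul2l ?lte_fin//; apply: ereal_sup_ubound; exists h' => //= x.
have := hf x; rewrite /patch; case: ifP => _; last first.
  move=> h0; have E0 : (point : \bar R) = 0 by []. rewrite E0 lee_fin in h0 *. exact: mulr_ge0_le0.
move=> hx; rewrite -(@lee_pmul2l _ k%:E) ?lte_fin//.
by rewrite -EFinM mulrA mulfV ?gt_eqF// mul1r.
Qed.
End LInt.
Section Cube.
Context {R : realType}.
Definition cube n (c : 'I_n -> R) (s : R) : set (n.-tuple R) :=
  [set x | forall i, `|tnth x i - c i| < s].

Lemma cube_measurable n (c : 'I_n -> R) (s : R) : measurable (cube c s).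
Proof.
have -> : cube c s = \bigcap_(i in [set: 'I_n]) ((fun x => tnth x i) @^-1` `]c i - s, c i + s[%classic).
  apply/seteqP; split => x /=.
    move=> H i _ /=; rewrite in_itv /=; have := H i; rewrite ltr_norml; lra.
  move=> H i; have := H i I; rewrite /= in_itv /= ltr_norml; lra.
apply: fin_bigcap_measurable; first exact: (@finite_finset (ordinal n) setT).
move=> i _; rewrite -[X in measurable X]setTI; exact: measurable_tnth.
Qed.

Lemma tcons0 n (p : n.-tuple R * R) : tnth (tcons p) ord0 = p.2.
Proof. by rewrite (tnth_nth 0). Qed.
Lemma tconsS n (p : n.-tuple R * R) i : tnth (tcons p) (lift ord0 i) = tnth p.1 i.
Proof. by rewrite /tcons tnthS. Qed.

Lemma cube_measure n (c : 'I_n -> R) (s : R) : 0 < s ->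
  lebesgue_Rn n (cube c s) = ((2 * s) ^+ n)%:E.
Proof.
move=> s0; elim: n c => [|n IH] c.
  rewrite /= diracE expr0; have -> : [tuple] \in cube c s by apply/mem_set => -[]. by [].
rewrite /= /pushm /pushforward.
have -> : @tcons R n @^-1` cube c s =
   cube (fun i => c (lift ord0 i)) s `*` `]c ord0 - s, c ord0 + s[%classic.
  apply/seteqP; split => -[t x] /=.
    move=> H; split.
      by move=> i; have := H (lift ord0 i); rewrite tconsS.
    by rewrite in_itv /=; have := H ord0; rewrite ltr_norml tcons0 /=; lra.
  move=> [H1 H2] i; case: (unliftP ord0 i) => [j ->|->].
    by rewrite tconsS; exact: H1.
  by move: H2; rewrite in_itv /= ltr_norml tcons0 /=; lra.
rewrite product_measure1E; [|exact: cube_measurable|exact: measurable_itv].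
rewrite IH; transitivity (((2 * s) ^+ n)%:E * (2*s)%:E)%E.
  congr (_ * _)%E; apply: eq_trans; first exact: (lebesgue_measure_itv `](c ord0 - s), (c ord0 + s)[).
  rewrite /= lte_fin ifT; [|lra]. by congr (_%:E); lra.
by rewrite -EFinM exprSr.
Qed.
End Cube.
Section Geo.
Context {R : realType}.
Definition nrm n (f : 'I_n -> R) := Num.sqrt (\sum_(i < n) f i ^+ 2).

Lemma nrm_ge0 n (f : 'I_n -> R) : 0 <= nrm f.
Proof. exact: sqrtr_ge0. Qed.

Lemma nrm_ext n (f g : 'I_n -> R) : (forall i, f i = g i) -> nrm f = nrm g.
Proof. by move=> fg; rewrite /nrm; congr Num.sqrt; apply: eq_bigr => i _; rewrite fg. Qed.

Lemma CS n (a b : 'I_n -> R) :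
  \sum_(i < n) a i * b i <= Num.sqrt (\sum_(i < n) a i ^+ 2) * Num.sqrt (\sum_(i < n) b i ^+ 2).
Proof.
set A := \sum_(i < n) a i ^+ 2; set B := \sum_(i < n) b i ^+ 2; set S := \sum_(i < n) a i * b i.
have A0 : 0 <= A by apply: sumr_ge0 => i _; exact: sqr_ge0.
have B0 : 0 <= B by apply: sumr_ge0 => i _; exact: sqr_ge0.
have [Aeq0|Agt0] := eqVneq A 0.
  have ai0 : forall i, a i = 0.
    move=> i; have H := @psumr_eq0P R _ xpredT (fun j => a j ^+ 2) (fun j _ => sqr_ge0 (a j)) Aeq0 i isT.
    by apply/eqP; rewrite -sqrf_eq0; apply/eqP.
  have -> : S = 0 by rewrite /S big1 // => i _; rewrite ai0 mul0r.
  by rewrite mulr_ge0 // sqrtr_ge0.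
have Apos : 0 < A by rewrite lt_def Agt0 A0.
have key : 0 <= A * (A * B - S ^+ 2).
  have -> : A * (A * B - S ^+ 2) = \sum_(i < n) (A * b i - S * a i) ^+ 2.
    have E : forall i : 'I_n, (A * b i - S * a i) ^+ 2 =
        A ^+ 2 * b i ^+ 2 + (- (2 * A * S)) * (a i * b i) + S ^+ 2 * a i ^+ 2.
      by move=> i; ring.
    rewrite (eq_bigr _ (fun i _ => E i)) !big_split /= -!mulr_sumr.
    rewrite /A /B /S; ring.
  by apply: sumr_ge0 => i _; exact: sqr_ge0.
have H2 : S ^+ 2 <= A * B.
  by rewrite -subr_ge0; move: key; rewrite pmulr_rge0.
rewrite -sqrtrM //.
apply: (le_trans (ler_norm S)).
by rewrite -(sqrtr_sqr S) ler_sqrt // ?mulr_ge0 // ?sqr_ge0.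
Qed.

Lemma mink n (a b c : 'I_n -> R) : (forall i, c i = a i + b i) ->
  nrm c <= nrm a + nrm b.
Proof.
move=> cE; rewrite /nrm.
set A := \sum_(i < n) a i ^+ 2; set B := \sum_(i < n) b i ^+ 2.
have A0 : 0 <= A by apply: sumr_ge0 => i _; exact: sqr_ge0.
have B0 : 0 <= B by apply: sumr_ge0 => i _; exact: sqr_ge0.
have E : \sum_(i < n) c i ^+ 2 = A + B + 2 * \sum_(i < n) a i * b i.
  rewrite /A /B mulr_sumr -!big_split /=; apply: eq_bigr => i _; rewrite cE; ring.
have SP : 0 <= Num.sqrt A + Num.sqrt B by rewrite addr_ge0 ?sqrtr_ge0.
rewrite E -(ger0_norm SP) -sqrtr_sqr.
rewrite ler_sqrt ?sqr_ge0 // sqrrD !sqr_sqrtr //.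
have := CS a b; rewrite -/A -/B => h; lra.
Qed.

Lemma nrm_scale n (k : R) (f g : 'I_n -> R) : (forall i, g i = k * f i) ->
  nrm g = `|k| * nrm f.
Proof.
move=> gE; rewrite /nrm.
have -> : \sum_(i < n) g i ^+ 2 = k ^+ 2 * \sum_(i < n) f i ^+ 2.
  by rewrite mulr_sumr; apply: eq_bigr => i _; rewrite gE exprMn.
rewrite sqrtrM ?sqr_ge0 // sqrtr_sqr //.
Qed.

Lemma nrm_coord n (f : 'I_n -> R) i : `|f i| <= nrm f.
Proof.
rewrite /nrm -(sqrtr_sqr (f i)) ler_sqrt; last by apply: sumr_ge0 => j _; exact: sqr_ge0.
rewrite (bigD1 i) //= lerDl; apply: sumr_ge0 => j _; exact: sqr_ge0.
Qed.

Lemma nrm_cube n (f : 'I_n -> R) (s : R) : 0 <= s -> (forall i, `|f i| <= s) ->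
  nrm f <= n%:R * s.
Proof.
move=> s0 H; rewrite /nrm -(ger0_norm (mulr_ge0 (ler0n _ n) s0)) -sqrtr_sqr ler_sqrt ?sqr_ge0 //.
apply: (le_trans (y := \sum_(i < n) s ^+ 2)).
  apply: ler_sum => i _; rewrite -real_normK ?num_real //.
  by rewrite lerXn2r ?nnegrE ?normr_ge0 //.
rewrite sumr_const card_ord exprMn -[_ *+ n]mulr_natl ler_wpM2r ?sqr_ge0 //.
case: n {f H} => [|n]; first by rewrite sqr_ge0.
by rewrite expr2 ler_peMl ?ler1n // ler0n.
Qed.

Lemma nrmN n (f g : 'I_n -> R) : (forall i, g i = - f i) -> nrm g = nrm f.
Proof. by move=> gE; rewrite /nrm; congr Num.sqrt; apply: eq_bigr => i _; rewrite gE sqrrN. Qed.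

Lemma cube_sub n (x0 : n.-tuple R) (R1 R2 dl : R) : (0 < n)%N ->
  0 <= R1 -> R1 < norm_Rn x0 < R2 -> 0 < dl -> 4 * dl <= R2 - R1 ->
  exists c : 'I_n -> R, forall z, cube c (dl / (2 * n%:R)) z ->
    (R1 < norm_Rn z < R2) /\ dist_Rn x0 z < 2 * dl.
Proof.
move=> n0 R10 /andP[h1 h2] dl0 hdl.
pose nx := norm_Rn x0.
have {h1}h1 : R1 < nx by [].
have {h2}h2 : nx < R2 by [].
have nx0 : 0 < nx by lra.
pose t := if nx <= (R1 + R2) / 2 then nx + dl else nx - dl.
have tE : (nx <= (R1 + R2) / 2 /\ t = nx + dl) \/ ((R1 + R2) / 2 < nx /\ t = nx - dl).
  by rewrite /t; case: ifP => h; [left|right; split=> //; rewrite ltNge h].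
have t0 : 0 < t by case: tE => -[]; lra.
pose k := t / nx.
exists (fun i => k * tnth x0 i) => z hz.
have nc : nrm (fun i => k * tnth x0 i) = t.
  rewrite (nrm_scale (k := k) (f := fun i => tnth x0 i)) // ger0_norm ?divr_ge0 ?ltW //.
  by rewrite /k -[nrm _]/nx mulfVK // gt_eqF.
have nxc : nrm (fun i => tnth x0 i - k * tnth x0 i) = dl.
  rewrite (nrm_scale (k := 1 - k) (f := fun i => tnth x0 i)); last by move=> i; ring.
  rewrite -[nrm _]/nx /k.
  have -> : 1 - t / nx = (nx - t) / nx by field; rewrite gt_eqF.
  rewrite normrM [`|nx^-1|]ger0_norm ?invr_ge0 ?ltW // -mulrA mulVf ?gt_eqF // mulr1.
  by case: tE => -[_ ->]; [rewrite ler0_norm|rewrite ger0_norm]; lra.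
have n0R : (0 : R) < n%:R by rewrite ltr0n.
have nzc : nrm (fun i => tnth z i - k * tnth x0 i) <= dl / 2.
  apply: le_trans (nrm_cube (s := dl / (2 * n%:R)) _ _) _.
  - by rewrite divr_ge0 ?ltW // mulr_gt0.
  - by move=> i; apply: ltW; exact: hz.
  by rewrite le_eqVlt; apply/orP; left; apply/eqP; field; rewrite gt_eqF.
have nzc' : nrm (fun i => k * tnth x0 i - tnth z i) <= dl / 2.
  by rewrite (nrmN (f := fun i => tnth z i - k * tnth x0 i)) // => i; ring.
have up : norm_Rn z <= t + dl / 2.
  have h : nrm (fun i => tnth z i) <= nrm (fun i => k * tnth x0 i) + nrm (fun i => tnth z i - k * tnth x0 i).
    by apply: mink => i; ring.
  rewrite nc in h; apply: le_trans h _; lra.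
have lo : t - dl / 2 <= norm_Rn z.
  have h : nrm (fun i => k * tnth x0 i) <= nrm (fun i => tnth z i) + nrm (fun i => k * tnth x0 i - tnth z i).
    by apply: mink => i; ring.
  rewrite nc in h; rewrite -[norm_Rn z]/(nrm (fun i => tnth z i)); lra.
split.
  by case: tE => -[h3 h4]; apply/andP; split; lra.
have h : nrm (fun i => tnth x0 i - tnth z i) <= nrm (fun i => tnth x0 i - k * tnth x0 i) + nrm (fun i => k * tnth x0 i - tnth z i).
  by apply: mink => i; ring.
rewrite nxc in h; rewrite -[dist_Rn x0 z]/(nrm (fun i => tnth x0 i - tnth z i)); lra.
Qed.
End Geo.

Section Bounds.
Context {R : realType}.
Local Open Scope ereal_scope.

Lemma lower_bound n (R1 R2 : R) (g : n.-tuple R -> R) (x0 : n.-tuple R)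
    (dl c lam : R) : (0 < n)%N -> (0 <= R1)%R ->
  (forall x, 0 <= g x)%R -> (R1 < norm_Rn x0 < R2)%R -> (0 < dl)%R ->
  (4 * dl <= R2 - R1)%R -> (0 <= c)%R -> (0 <= lam)%R ->
  (forall y, dist_Rn x0 y < 2 * dl -> c <= g y)%R ->
  ((c `^ lam) * (dl / n%:R) ^+ n)%:E <=
    \int[lebesgue_Rn n]_(x in annulus R1 R2) (g x `^ lam)%:E.
Proof.
move=> n0 R10 g0 hx0 dl0 hdl c0 lam0 hg.
have [cc hcc] := cube_sub n0 R10 hx0 dl0 hdl.
set s := (dl / (2 * n%:R))%R.
have s0 : (0 < s)%R by rewrite divr_gt0 // mulr_gt0 // ltr0n.
have -> : ((c `^ lam) * (dl / n%:R) ^+ n)%:E =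
    \int[lebesgue_Rn n]_(x in cube cc s) (cst (c `^ lam)%:E) x.
  rewrite integral_cst; last exact: cube_measurable.
  rewrite cube_measure // -EFinM; congr (_ * _ ^+ _)%:E.
  rewrite /s; field; rewrite pnatr_eq0 -lt0n //.
apply: lint_le.
- by move=> x _; rewrite lee_fin powR_ge0.
- by move=> x _; rewrite lee_fin powR_ge0.
move=> x; rewrite /patch; case: ifP => xQ; last first.
  by case: ifP => _; rewrite // lee_fin powR_ge0.
have [xA dx] := hcc x (set_mem xQ).
rewrite ifT; last exact: mem_set.
rewrite lee_fin; apply: ge0_ler_powR => //; rewrite ?nnegrE //.
by apply: hg.
Qed.

Lemma int_le_box n (R2 M : R) (f : n.-tuple R -> R) (R1 : R) : (0 < R2)%R ->
  (0 <= M)%R -> (forall x, 0 <= f x <= M)%R ->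
  \int[lebesgue_Rn n]_(x in annulus R1 R2) (f x)%:E <= (M * (2 * R2) ^+ n)%:E.
Proof.
move=> R20 M0 hf.
have -> : (M * (2 * R2) ^+ n)%:E =
    \int[lebesgue_Rn n]_(x in cube (fun=> 0%R) R2) (cst M%:E) x.
  by rewrite integral_cst ?cube_measure // ; exact: cube_measurable.
apply: lint_le.
- by move=> x _; rewrite lee_fin; case/andP: (hf x).
- by move=> x _; rewrite lee_fin.
move=> x; rewrite /patch; case: ifP => xA; last first.
  by case: ifP => _; rewrite // lee_fin.
have /andP[_ xR2] := set_mem xA.
rewrite ifT; last first.
  apply: mem_set => i /=; rewrite subr0.
  exact: le_lt_trans (nrm_coord (fun i => tnth x i) i) xR2.
by rewrite lee_fin; case/andP: (hf x).
Qed.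

Lemma Rint_fin n (R2 M : R) (f : n.-tuple R -> R) (R1 : R) : (0 < R2)%R ->
  (0 <= M)%R -> (forall x, 0 <= f x <= M)%R ->
  (Rintegral (lebesgue_Rn n) (annulus R1 R2) f)%:E =
     \int[lebesgue_Rn n]_(x in annulus R1 R2) (f x)%:E.
Proof.
move=> R20 M0 hf; rewrite /Rintegral fineK //.
rewrite ge0_fin_numE; last by apply: integral_ge0 => x _; rewrite lee_fin; case/andP: (hf x).
exact: le_lt_trans (int_le_box _ R20 M0 hf) (ltry _).
Qed.
End Bounds.
Section Arith.
Context {R : realType}.
Definition CA (g l D lH ln2 lnD : R) :=
  g * (1 - l) * l * (2 * ln2) + g * (1 - l) * D * lnD + (1 - l) * D * g * ln2
  + (1 - l) * D * (2 * ln2 + lH).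
Definition CB (g l D lH ln2 lnD lc0 : R) :=
  D * (1 - l) * lH + g * (1 - l) * l * (2 * ln2) + g * (1 - l) * D * (2 * ln2)
  + g * (1 - l) * D * lnD + D * (D - 1 + g * l) * lc0 / (g + D - 1).
Definition lNdef (g l D lH ln2 lnD lc0 : R) :=
  (`|CA g l D lH ln2 lnD + D * lc0| + `|CB g l D lH ln2 lnD lc0|) / (g + D).

Lemma final_arith (g l D lM lL lm lH ln2 lnD ldl lrho lR lc0 : R) :
  0 < g < 1 -> 0 < l < 1 -> 1 <= D ->
  lM <= (1 - l) * lm + lL ->
  l * (lm - 2 * ln2) + D * (ldl - lnD) <= lL ->
  lm <= lH ->
  (g + D - 1) * lrho < lc0 + (D - 1) * lR ->
  0 <= lR ->
  (g * (ldl + ln2) >= lm - 2 * ln2 - lH \/ ldl = lrho - 2 * ln2) ->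
  (g * l + D) * lM <= (g + D) * lNdef g l D lH ln2 lnD lc0 + D * (D - 1) * lR
      - D * (g + D - 1) * lrho + (g + D) * lL.
Proof.
move=> /andP[g0 g1] /andP[l0 l1] D1 h1 h2 h3 h5 h6 hc.
set CA0 := CA g l D lH ln2 lnD; set CB0 := CB g l D lH ln2 lnD lc0.
have qE : (g + D) * lNdef g l D lH ln2 lnD lc0 = `|CA0 + D * lc0| + `|CB0|.
  by rewrite /lNdef mulrC mulfVK // gt_eqF //; lra.
have nA := ler_norm (CA0 + D * lc0); have nB := ler_norm CB0.
have nA0 := normr_ge0 (CA0 + D * lc0); have nB0 := normr_ge0 CB0.
have eA : CA0 = g * (1 - l) * l * (2 * ln2) + g * (1 - l) * D * lnD + (1 - l) * D * g * ln2
  + (1 - l) * D * (2 * ln2 + lH) by [].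
have eB : CB0 = D * (1 - l) * lH + g * (1 - l) * l * (2 * ln2) + g * (1 - l) * D * (2 * ln2)
  + g * (1 - l) * D * lnD + D * (D - 1 + g * l) * lc0 / (g + D - 1) by [].
clearbody CA0 CB0.
have c1 : 0 <= g * l + D by rewrite addr_ge0 // ?mulr_ge0 //; lra.
have c2 : 0 <= g * (1 - l) by rewrite mulr_ge0 //; lra.
have c3 : 0 <= (1 - l) * D by rewrite mulr_ge0 //; lra.
have c4 : 0 <= D by lra.
have P1 := ler_wpM2l c1 h1.
have P2 := ler_wpM2l c2 h2.
have P5 : D * ((g + D - 1) * lrho) < D * (lc0 + (D - 1) * lR).
  by rewrite ltr_pM2l //; lra.
case: hc => hc.
  have P3 := ler_wpM2l c3 hc.
  lra.
have p0 : 0 < g + D - 1 by lra.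
have gl0 : 0 <= g * l := mulr_ge0 (ltW g0) (ltW l0).
have e0 : 0 <= D * (D - 1 + g * l) by rewrite mulr_ge0 //; lra.
have h5' : lrho <= (lc0 + (D - 1) * lR) / (g + D - 1).
  by rewrite ler_pdivlMr // mulrC; lra.
have P5B := ler_wpM2l e0 h5'.
have P3B := ler_wpM2l c3 h3.
have P6 : D * (D - 1 + g * l) * ((D - 1) * lR / (g + D - 1)) <= D * (D - 1) * lR.
  have gl1 : g * l <= g * 1 by rewrite ler_wpM2l //; lra.
  have r1 : (D - 1 + g * l) / (g + D - 1) <= 1 by rewrite ler_pdivrMr // mul1r; lra.
  have E : D * (D - 1 + g * l) * ((D - 1) * lR / (g + D - 1)) =
      D * (D - 1) * lR * ((D - 1 + g * l) / (g + D - 1)) by field; lra.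
  have z0 : 0 <= D * (D - 1) * lR by rewrite mulr_ge0 // mulr_ge0 //; lra.
  by rewrite E -[X in _ <= X]mulr1 ler_wpM2l.
have S1 : (g * l + D) * lM <= (g + D) * lL + (D * (1 - l) * lH + 2 * g * (1 - l) * l * ln2 + g * (1 - l) * D * lnD + 2 * g * (1 - l) * D * ln2) - g * (1 - l) * D * lrho.
  rewrite hc in P2. lra.
have S2 : D * (D - 1 + g * l) * lrho <= D * (D - 1 + g * l) * lc0 * (g + D - 1)^-1 + D * (D - 1) * lR.
  lra.
lra.
Qed.

Lemma final_real (d : nat) (g l Hh c0 Rad rho M L : R) :
  0 < g < 1 -> 0 < l < 1 -> (0 < d)%N -> 1 < Hh -> 0 < c0 -> 1 < Rad -> 0 < rho ->
  rho < (c0 * Rad ^+ d.-1) `^ ((g + d%:R - 1)^-1) ->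
  0 <= M -> 0 <= L ->
  (0 < M -> exists m dl, [/\ 0 < m, m <= Hh, M <= m `^ (1 - l) * L, 0 < dl &
      ((m / 4) `^ l * (dl / d%:R) ^+ d <= L /\
      ((m / (4 * Hh)) `^ (g^-1) <= 2 * dl \/ dl = rho / 4))]) ->
  M `^ ((g * l + d%:R) / (g + d%:R)) <=
  expR (lNdef g l d%:R (ln Hh) (ln 2) (ln d%:R) (ln c0))
  * Rad `^ ((d%:R * (d%:R - 1)) / (g + d%:R))
  * rho `^ (- ((d%:R * (g + d%:R - 1)) / (g + d%:R)))
  * L.
Proof.
move=> /andP[g0 g1] /andP[l0 l1] d0 H1 c00 Rad1 rho0 hrho M0 L0 hmain.
have D1 : (1 : R) <= d%:R by rewrite ler1n.
have q0 : 0 < g + d%:R by lra.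
have th0 : 0 < (g * l + d%:R) / (g + d%:R).
  by rewrite divr_gt0 // addr_gt0 ?mulr_gt0 //; lra.
have [->|Mpos] := eqVneq M 0.
  rewrite powR0 ?gt_eqF //.
  by rewrite !mulr_ge0 ?expR_ge0 ?powR_ge0.
have {}Mpos : 0 < M by rewrite lt_def Mpos M0.
have [m [dl [m0 mH hML dl0 [hL hc]]]] := hmain Mpos.
have Lpos : 0 < L.
  apply: lt_le_trans hL; rewrite mulr_gt0 ?powR_gt0 ?exprn_gt0 ?divr_gt0 //; lra.
have Hpos : 0 < Hh by lra.
have Rpos : 0 < Rad by lra.
have ln4 : ln (4 : R) = 2 * ln 2.
  by rewrite (_ : 4 = 2 * 2) ?lnM ?posrE //; [lra|rewrite -natrM].
have dE : d%:R = (d.-1)%:R + 1 :> R by rewrite natr1 prednK.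
have h1 : ln M <= (1 - l) * ln m + ln L.
  have := hML; rewrite -ler_ln ?posrE ?mulr_gt0 ?powR_gt0 //.
  by rewrite lnM ?posrE ?powR_gt0 // ln_powR.
have h2 : l * (ln m - 2 * ln 2) + d%:R * (ln dl - ln d%:R) <= ln L.
  have m4 : 0 < m / 4 by rewrite divr_gt0.
  have dD : 0 < dl / d%:R by rewrite divr_gt0 //; lra.
  have := hL; rewrite -ler_ln ?posrE ?mulr_gt0 ?powR_gt0 ?exprn_gt0 //.
  rewrite lnM ?posrE ?powR_gt0 ?exprn_gt0 //.
  rewrite ln_powR lnXn // ln_div ?posrE // ln_div ?posrE // ?ln4 -mulr_natl; last lra.
  lra.
have h3 : ln m <= ln Hh by rewrite ler_ln ?posrE.
have h6 : 0 <= ln Rad by rewrite ln_ge0 // ltW.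
have h5 : (g + d%:R - 1) * ln rho < ln c0 + (d%:R - 1) * ln Rad.
  have p0 : 0 < g + d%:R - 1 by lra.
  have := hrho; rewrite -ltr_ln ?posrE ?powR_gt0 ?mulr_gt0 ?exprn_gt0 //.
  rewrite ln_powR lnM ?posrE ?exprn_gt0 // lnXn // -[ln Rad *+ _]mulr_natl.
  rewrite ltr_pdivlMl // => h; move: h; rewrite dE; lra.
have hc' : g * (ln dl + ln 2) >= ln m - 2 * ln 2 - ln Hh \/ ln dl = ln rho - 2 * ln 2.
  case: hc => hc; [left|right].
    have mH4 : 0 < m / (4 * Hh) by rewrite divr_gt0 // mulr_gt0.
    have iH : 0 < (4 * Hh)^-1 by rewrite invr_gt0 mulr_gt0.
    move: hc; rewrite -ler_ln ?posrE ?powR_gt0 ?mulr_gt0 //.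
    rewrite ln_powR lnM ?posrE ?invr_gt0 ?mulr_gt0 // lnV ?posrE ?mulr_gt0 //.
    rewrite !lnM ?posrE // ln4 => h.
    have := ler_wpM2l (ltW g0) h; rewrite mulrA mulfV ?gt_eqF // mul1r; lra.
  by rewrite hc ln_div ?posrE // ln4.
have gg : 0 < g < 1 by apply/andP.
have ll : 0 < l < 1 by apply/andP.
have F := final_arith (g := g) (l := l) (D := d%:R) (lM := ln M) (lL := ln L) (lnD := ln d%:R) (lc0 := ln c0)
  gg ll D1 h1 h2 h3 h5 h6 hc'.
have pR : 0 < Rad `^ (d%:R * (d%:R - 1) / (g + d%:R)) by rewrite powR_gt0.
have pr : 0 < rho `^ (- (d%:R * (g + d%:R - 1) / (g + d%:R))) by rewrite powR_gt0.
have pN : 0 < expR (lNdef g l d%:R (ln Hh) (ln 2) (ln d%:R) (ln c0)) by rewrite expR_gt0.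
rewrite -ler_ln ?posrE ?powR_gt0 ?mulr_gt0 //.
rewrite !lnM ?posrE ?powR_gt0 ?mulr_gt0 // expRK !ln_powR.
rewrite -(ler_pM2l q0).
set lN := lNdef _ _ _ _ _ _ _ in F *.
have E1 : (g + d%:R) * ((g * l + d%:R) / (g + d%:R) * ln M) = (g * l + d%:R) * ln M.
  by field; rewrite gt_eqF.
have E2 : (g + d%:R) * (lN + d%:R * (d%:R - 1) / (g + d%:R) * ln Rad +
     - (d%:R * (g + d%:R - 1) / (g + d%:R)) * ln rho + ln L) =
   (g + d%:R) * lN + d%:R * (d%:R - 1) * ln Rad - d%:R * (g + d%:R - 1) * ln rho
     + (g + d%:R) * ln L.
  by field; rewrite gt_eqF.
by rewrite E1 E2.
Qed.
End Arith.

Unset Implicit Arguments.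
Unset Strict Implicit.

Theorem lemma4p2 (R : realType) (gamma lambda : R) (d : nat) (H : R) :
  0 < gamma < 1 -> 0 < lambda < 1 -> (0 < d)%N -> 1 < H ->
  exists N : R,
  forall (a b : R) (g : d.-tuple R -> R),
    0 <= a -> a < b ->
    (forall x, 0 <= g x) ->
    (forall x, g x <= H) ->
    continuous_Rn g ->
    (forall x y, `|g x - g y| <= H * (dist_Rn x y) `^ gamma) ->
  forall (Rad r : R), 1 < Rad ->
    0 < r ->
    r < Rad / b ->
    r < (b - a)^-1 *
        (2 `^ (- ((gamma + 1) / gamma)) * H `^ (- (d%:R / gamma))
         * Rad ^+ d.-1
         * (d%:R * pi `^ (d%:R / 2) / Gamma (d%:R / 2 + 1)))
          `^ ((gamma + d%:R - 1)^-1) ->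
    (Rintegral (@lebesgue_Rn R d) (annulus (Rad + a * r) (Rad + b * r)) g)
        `^ ((gamma * lambda + d%:R) / (gamma + d%:R))
    <= N * Rad `^ ((d%:R * (d%:R - 1)) / (gamma + d%:R))
         * (r * (b - a)) `^ (- ((d%:R * (gamma + d%:R - 1)) / (gamma + d%:R)))
         * Rintegral (@lebesgue_Rn R d) (annulus (Rad + a * r) (Rad + b * r))
             (fun x => g x `^ lambda).
Proof.
move=> hg hl d0 H1.
have /andP[g0 g1] := hg; have /andP[l0 l1] := hl.
pose G := Gamma (d%:R / 2 + 1 : R).
pose c0 := 2 `^ (- ((gamma + 1) / gamma)) * H `^ (- (d%:R / gamma))
   * (d%:R * pi `^ (d%:R / 2) / G).
exists (expR (lNdef gamma lambda d%:R (ln H) (ln 2) (ln d%:R) (ln c0))).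
move=> a b g a0 ab gge0 gleH gcont ghol Rad r Rad1 r0 _ hr.
have D1 : (1 : R) <= d%:R by rewrite ler1n.
have G0 : 0 <= G.
  by apply: Rintegral_ge0 => t _; exact: mulr_ge0 (powR_ge0 _ _) (expR_ge0 _).
have p0 : 0 < (gamma + d%:R - 1)^-1 by rewrite invr_gt0; lra.
have XE : 2 `^ (- ((gamma + 1) / gamma)) * H `^ (- (d%:R / gamma))
         * Rad ^+ d.-1 * (d%:R * pi `^ (d%:R / 2) / Gamma (d%:R / 2 + 1))
     = c0 * Rad ^+ d.-1 by rewrite /c0 /G; ring.
rewrite XE in hr.
have Gpos : 0 < G.
  rewrite lt_def G0 andbT; apply/negP => /eqP G00.
  move: hr; rewrite /c0 G00 invr0 !mulr0 mul0r powR0 ?gt_eqF // mulr0; lra.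
have c0pos : 0 < c0.
  have q1 : 0 < d%:R * pi `^ (d%:R / 2) / G.
    by rewrite divr_gt0 // mulr_gt0 ?powR_gt0 ?pi_gt0 //; lra.
  have q2 : 0 < 2 `^ (- ((gamma + 1) / gamma)) by rewrite powR_gt0.
  have q3 : 0 < H `^ (- (d%:R / gamma)) by rewrite powR_gt0 //; lra.
  exact: mulr_gt0 (mulr_gt0 q2 q3) q1.
have ba0 : 0 < b - a by rewrite subr_gt0.
have rho0 : 0 < r * (b - a) by rewrite mulr_gt0.
have hrho : r * (b - a) < (c0 * Rad ^+ d.-1) `^ ((gamma + d%:R - 1)^-1).
  have E : (b - a) * ((b - a)^-1 * (c0 * Rad ^+ d.-1) `^ (gamma + d%:R - 1)^-1)
      = (c0 * Rad ^+ d.-1) `^ (gamma + d%:R - 1)^-1 by rewrite mulrA mulfV ?gt_eqF // mul1r.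
  by rewrite -E mulrC ltr_pM2l.
pose A : set (d.-tuple R) := annulus (Rad + a * r) (Rad + b * r).
have ar0 : 0 <= a * r by rewrite mulr_ge0 //; lra.
have R10 : 0 <= Rad + a * r by lra.
have br0 : 0 <= b * r by rewrite mulr_ge0 //; lra.
have R20 : 0 < Rad + b * r by lra.
have gb : forall x, 0 <= g x <= H by move=> x; rewrite gge0 gleH.
have gl0 : forall x, 0 <= g x `^ lambda <= H `^ lambda.
  move=> x; rewrite powR_ge0 /=; apply: ge0_ler_powR; rewrite ?nnegrE //; lra.
have HL0 : 0 <= H `^ lambda by rewrite powR_ge0.
have H0 : 0 <= H by lra.
have F := @final_real R d gamma lambda H c0 Rad (r * (b - a)) (Rintegral (@lebesgue_Rn R d) (annulus (Rad + a * r) (Rad + b * r)) g) (Rintegral (@lebesgue_Rn R d) (annulus (Rad + a * r) (Rad + b * r)) (fun x => g x `^ lambda)) hg hl d0 H1 c0pos Rad1 rho0 hrho.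
apply: F; [exact: Rintegral_ge0| |].
  by apply: Rintegral_ge0 => x _; rewrite powR_ge0.
move=> Mpos.
have [[x1 [Ax1 gx1]]|hn] := pselect (exists x1, A x1 /\ 0 < g x1); last first.
  exfalso; move: Mpos; rewrite /Rintegral integral0_eq ?lt_irreflexive //.
  move=> x Ax; congr (_%:E); have := gge0 x; rewrite le_eqVlt => /orP[/eqP <-//|h].
  by exfalso; apply: hn; exists x.
pose E := [set g x | x in A].
have hsE : has_sup E.
  split; first by exists (g x1); exists x1.
  by exists H => _ [x _ <-].
pose m := sup E.
have gm : forall x, A x -> g x <= m by move=> x Ax; apply: sup_upper_bound => //; exists x.
have m0 : 0 < m by apply: lt_le_trans gx1 (gm _ Ax1).
have mH : m <= H by apply: ge_sup; [exists (g x1); exists x1|move=> _ [x _ <-]].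
have [_ [x0 Ax0 <-] hx0] := sup_adherent (eps := m / 2) (ltac:(rewrite divr_gt0 //)) hsE.
rewrite -/m in hx0.
set v := g x0 in hx0.
have v0 : 0 < v by lra.
exists m.
pose w := (v / (2 * H)) `^ (gamma^-1).
have w0 : 0 < w by rewrite powR_gt0 // divr_gt0 // mulr_gt0; lra.
pose dl := if w / 2 <= r * (b - a) / 4 then w / 2 else r * (b - a) / 4.
exists dl.
have dl0 : 0 < dl by rewrite /dl; case: ifP => _; rewrite divr_gt0.
have dlle : dl <= r * (b - a) / 4 by rewrite /dl; case: ifP => // /negbT; rewrite -ltNge => /ltW.
have dlw : 2 * dl <= w by rewrite /dl; case: ifP => h; lra.
split => //.
-
  rewrite -lee_fin EFinM (Rint_fin _ R20 H0 gb) (Rint_fin _ R20 HL0 gl0).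
  have mp : 0 < m `^ (1 - lambda) by rewrite powR_gt0.
  apply: le_trans (lint_scale _ mp _); last by move=> x _; rewrite lee_fin powR_ge0.
  apply: lint_le; [by move=> x _; rewrite lee_fin| |].
    by move=> x _; rewrite lee_fin mulr_ge0 ?powR_ge0 // ltW.
  move=> x; rewrite /patch; case: ifP => xA //.
  rewrite lee_fin; have := gge0 x; rewrite le_eqVlt => /orP[/eqP <-|gxp].
    by rewrite mulr_ge0 ?powR_ge0 // ltW.
  have e : g x = g x `^ lambda * g x `^ (1 - lambda).
    rewrite -powRD; last by apply/implyP => _; rewrite gt_eqF.
    by rewrite addrC subrK powRr1 // ltW.
  rewrite {1}e mulrC ler_wpM2r ?powR_ge0 //.
  apply: ge0_ler_powR; [lra|by rewrite nnegrE ltW|by rewrite nnegrE ltW|].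
  by apply: gm; exact: set_mem.
split.
- rewrite -lee_fin (Rint_fin _ R20 HL0 gl0).
  apply: (lower_bound (x0 := x0)) => //.
  + lra.
  + by rewrite divr_ge0 // ltW.
  + exact: ltW.
  + move=> y hy.
    have hd : dist_Rn x0 y < w by lra.
    have dpos : 0 <= dist_Rn x0 y by exact: (nrm_ge0 (fun i => tnth x0 i - tnth y i)).
    have hw : w `^ gamma = v / (2 * H).
      rewrite /w -powRrM mulVf ?gt_eqF // powRr1 // divr_ge0 // ?ltW //; lra.
    have := gt0_ltr_powR g0 (x := dist_Rn x0 y) (y := w); rewrite !nnegrE => /(_ dpos (ltW w0) hd).
    rewrite hw => hlt.
    have := ghol x0 y; rewrite -/v => hh.
    have hlt' : H * dist_Rn x0 y `^ gamma < v / 2.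
      have : H * dist_Rn x0 y `^ gamma < H * (v / (2 * H)) by rewrite ltr_pM2l //; lra.
      have E2 : H * (v / (2 * H)) = v / 2 by field; rewrite gt_eqF //; lra.
      by rewrite E2.
    move: hh; rewrite ler_norml => /andP[_ hh]; lra.
rewrite /dl; case: ifP => h; [left|by right].
have -> : 2 * (w / 2) = w by field.
have H2 : 0 < 2 * H by rewrite mulr_gt0 //; lra.
have mH4 : 0 <= m / (4 * H) by rewrite divr_ge0 ?ltW // mulr_gt0 //; lra.
have vH2 : 0 <= v / (2 * H) by rewrite divr_ge0 ?ltW.
apply: ge0_ler_powR; [by rewrite invr_ge0 ltW|by rewrite nnegrE|by rewrite nnegrE|].
have -> : m / (4 * H) = (m / 2) / (2 * H) by field; rewrite gt_eqF //; lra.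
by rewrite ler_wpM2r ?invr_ge0 ?ltW //; lra.
Qed.
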